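(* Let $\delta\ge1$, $d_Y\le d_X$, and let $\Sigma=X\sqcup Y$ be a $\delta$-approximately $(d_X,d_Y)$-biregular bipartite graph. Let $a,g\in\mathbb N$, $1\le\psi_X\le d_X-1$ and $1\le\psi_Y\le d_Y/\delta-1$. If $(F,S)$ is a $(\psi_X,\psi_Y)$-approximating pair for some $A\in\mathcal G(a,g)$, then, with $s=|S|$ and $f=|F|$, \[ s\le f+\frac{1}{d_X}\big[(g-f)\psi_Y+(s-a)\psi_X\big].\]
   Context: A bipartite graph $\Sigma$ with parts $X,Y$ is $\delta$-approximately $(d_X,d_Y)$-biregular if every $v\in X$ has degree $d(v)\in[d_X,\delta d_X]$ and every $v\in Y$ has degree $d(v)\in[\delta^{-1}d_Y,d_Y]$. $N(S)$ is the set of neighbours of $S$; $d_B(x)=|N(x)\cap B|$. For $A\subseteq X$, $[A]=\{x\in X:N(x)\subseteq N(A)\}$. A set is 2-linked if it induces a connected subgraph of $\Sigma^2$ (vertices adjacent iff at distance at most 2 in $\Sigma$). $\mathcal G(a,g)=\{A\subseteq X\text{ 2-linked}:|[A]|=a,|N(A)|=g\}$. A $(\psi_X,\psi_Y)$-approximating pair for $A\subseteq X$ is a pair $(F,S)\in 2^Y\times 2^X$ with $F\subseteq N(A)$, $S\supseteq[A]$, $d_F(u)\ge d(u)-\psi_X$ for all $u\in S$, and $d_{X\setminus S}(v)\ge d(v)-\psi_Y$ for all $v\in Y\setminus F$. *)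

(* Defs.v *)
From mathcomp Require Import all_boot all_order all_algebra.
Set Implicit Arguments. Unset Strict Implicit. Unset Printing Implicit Defensive.
Import Order.TTheory GRing.Theory Num.Theory.

Section Bip.
Variables (X Y : finType) (adj : X -> Y -> bool).

Definition NX (x : X) : {set Y} := [set y | adj x y].
Definition NY (y : Y) : {set X} := [set x | adj x y].
Definition NS (S : {set X}) : {set Y} := [set y | [exists x in S, adj x y]].
Definition degX (x : X) : nat := #|NX x|.
Definition degY (y : Y) : nat := #|NY y|.
Definition degXin (B : {set Y}) (x : X) : nat := #|NX x :&: B|.
Definition degYin (B : {set X}) (y : Y) : nat := #|NY y :&: B|.

Definition closure (A : {set X}) : {set X} := [set x | NX x \subset NS A].

(* adjacency in Sigma^2 restricted to A ⊆ X: distance <= 2, i.e. a common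
   neighbour (two vertices of X are never adjacent in Sigma) *)
Definition sq_rel (A : {set X}) : rel X :=
  fun x x' => [&& x \in A, x' \in A & [exists y, adj x y && adj x' y]].
Definition two_linked (A : {set X}) : Prop :=
  forall x x', x \in A -> x' \in A -> connect (sq_rel A) x x'.

Definition calG (a g : nat) (A : {set X}) : Prop :=
  two_linked A /\ #|closure A| = a /\ #|NS A| = g.

Variable R : realFieldType.

Definition approx_biregular (delta dX dY : R) : Prop :=
  (forall x : X, dX <= (degX x)%:R <= delta * dX)%R /\
  (forall y : Y, delta^-1 * dY <= (degY y)%:R <= dY)%R.

Definition approx_pair (psiX psiY : R) (A : {set X}) (F : {set Y}) (S : {set X})
  : Prop :=
  [/\ F \subset NS A, closure A \subset S,
      (forall u, u \in S -> (degX u)%:R - psiX <= (degXin F u)%:R)%R &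
      (forall v, v \in ~: F -> (degY v)%:R - psiY <= (degYin (~: S) v)%:R)%R].

End Bip.

(* Main.v *)
Require Import Defs.
From mathcomp Require Import all_boot all_order all_algebra.
From mathcomp Require Import ring lra.
Import Order.TTheory GRing.Theory Num.Theory.
Local Open Scope ring_scope.

Lemma card_adj_sum (T : finType) (P : pred T) (B : {set T}) :
  #|[set y | P y] :&: B| = (\sum_(y in B) (P y : nat))%N.
Proof.
rewrite -sum1_card big_mkcond [RHS]big_mkcond /=.
apply: eq_bigr => y _; rewrite !inE.
by case: (P y); case: (y \in B).
Qed.

Theorem proposition2p3 (R : realFieldType) (X Y : finType) (adj : X -> Y -> bool)
  (delta dX dY psiX psiY : R) (a g : nat) (A : {set X}) (F : {set Y}) (S : {set X}) :
  1 <= delta -> dY <= dX ->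
  approx_biregular adj delta dX dY ->
  1 <= psiX -> psiX <= dX - 1 ->
  1 <= psiY -> psiY <= dY / delta - 1 ->
  calG adj a g A ->
  approx_pair adj psiX psiY A F S ->
  (#|S|%:R : R) <= #|F|%:R +
     dX^-1 * ((g%:R - #|F|%:R) * psiY + (#|S|%:R - a%:R) * psiX).
Proof.
move=> _ hYX [hX hY] hpx1 hpx2 _ _ [_ [ha hg]] [hF hcl hS hnF].
set B := NS adj A.
have dc : (\sum_(u in S) degXin adj B u = \sum_(v in B) degYin adj S v)%N.
  rewrite /degXin /degYin /NX /NY.
  under eq_bigr => u _ do rewrite card_adj_sum.
  under [RHS]eq_bigr => v _ do rewrite card_adj_sum.
  exact: exchange_big.
have hk := cardsID (Defs.closure adj A) S.
rewrite (setIidPr hcl) ha in hk.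
set k := #|S :\: Defs.closure adj A| in hk.
have hm := cardsID F B.
rewrite (setIidPr hF) hg in hm.
set m := #|B :\: F| in hm.
have lo : (a%:R + k%:R) * dX - k%:R * psiX <= \sum_(u in S) (degXin adj B u)%:R.
  rewrite (big_setID (Defs.closure adj A)) /= (setIidPr hcl).
  have e1 : \sum_(u in Defs.closure adj A) dX <= \sum_(u in Defs.closure adj A) (degXin adj B u)%:R.
    apply: ler_sum => u; rewrite inE => hu.
    rewrite /degXin (setIidPl hu); by case/andP: (hX u).
  have e2 : \sum_(u in S :\: Defs.closure adj A) (dX - psiX) <=
            \sum_(u in S :\: Defs.closure adj A) (degXin adj B u)%:R.
    apply: ler_sum => u; rewrite inE => /andP [_ hu].
    have h1 := hS u hu.
    have h2 : (degXin adj F u <= degXin adj B u)%N.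
      by apply: subset_leq_card; apply: setIS.
    have h3 : ((degXin adj F u)%:R <= (degXin adj B u)%:R :> R) by rewrite ler_nat.
    case/andP: (hX u) => h4 _. lra.
  rewrite !sumr_const ha -/k in e1 e2.
  rewrite -[dX *+ _]mulr_natr -[(dX - psiX) *+ _]mulr_natr in e1 e2. lra.
have up : \sum_(v in B) (degYin adj S v)%:R <= #|F|%:R * dX + m%:R * psiY.
  rewrite (big_setID F) /= (setIidPr hF).
  have e1 : \sum_(v in F) (degYin adj S v)%:R <= \sum_(v in F) dX.
    apply: ler_sum => v _.
    have h2 : (degYin adj S v <= degY adj v)%N.
      by apply: subset_leq_card; apply: subsetIl.
    have h3 : ((degYin adj S v)%:R <= (degY adj v)%:R :> R) by rewrite ler_nat.
    case/andP: (hY v) => _ h4. lra.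
  have e2 : \sum_(v in B :\: F) (degYin adj S v)%:R <= \sum_(v in B :\: F) psiY.
    apply: ler_sum => v; rewrite inE => /andP [hv _].
    have h1 : v \in ~: F by rewrite inE.
    have {}h1 := hnF v h1.
    have h2 := cardsID S (NY adj v).
    rewrite setDE in h2.
    have h3 : ((degYin adj S v)%:R + (degYin adj (~: S) v)%:R = (degY adj v)%:R :> R).
      by rewrite -natrD /degYin /degY h2.
    lra.
  rewrite !sumr_const -/m in e1 e2.
  rewrite -[dX *+ _]mulr_natr -[psiY *+ _]mulr_natr in e1 e2. lra.
have eq : \sum_(u in S) (degXin adj B u)%:R = \sum_(v in B) (degYin adj S v)%:R :> R.
  by rewrite -!natr_sum dc.
have dXp : 0 < dX by lra.
rewrite -hk -hm !natrD.
have -> : (#|F|%:R + m%:R - #|F|%:R) * psiY + (a%:R + k%:R - a%:R) * psiX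
  = m%:R * psiY + k%:R * psiX :> R by ring.
have key : (a%:R + k%:R) - #|F|%:R <= dX^-1 * (m%:R * psiY + k%:R * psiX) :> R.
  rewrite ler_pdivlMl //. lra.
lra.
Qed.
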